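(* Let $L>0$ be fixed. There exists $C>0$ such that for all $\delta t\in(0,1)$ and all integers $p\ge1$, $n\ge1$, $$\delta t^2\sum_{\substack{(k_1,k_2)\in\{0,\dots,n-1\}^2\\ 2n-2-k_1-k_2\ge1}}\frac{e^{-p^2\frac{\pi^2}{L^2}(k_1+k_2)\delta t}}{\sqrt{(2n-2-k_1-k_2)\delta t}}\le C.$$ *)

(* Defs.v *)
From Stdlib Require Import Reals Lra Lia.
Open Scope R_scope.

Definition lemma6p4_term (L dt : R) (p n k1 k2 : nat) : R :=
  if Nat.leb 1 (2 * n - 2 - k1 - k2)%nat then
    exp (- (INR p)^2 * (PI^2 / L^2) * (INR (k1 + k2)) * dt)
    / sqrt (INR (2 * n - 2 - k1 - k2) * dt)
  else 0.

Definition lemma6p4_sum (L dt : R) (p n : nat) : R :=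
  sum_f_R0 (fun k1 => sum_f_R0 (fun k2 => lemma6p4_term L dt p n k1 k2) (n - 1))
    (n - 1).

(* Main.v *)
Require Import Defs.
From Stdlib Require Import Reals Lra Lia.
Open Scope R_scope.

Lemma expk (k : nat) (z : R) : exp (INR k * z) = exp z ^ k.
Proof.
  induction k as [|k IH].
  - simpl. rewrite Rmult_0_l, exp_0. reflexivity.
  - rewrite S_INR. replace ((INR k + 1) * z) with (INR k * z + z) by ring.
    rewrite exp_plus, IH. simpl. ring.
Qed.

Lemma exp_mono (x y : R) : x <= y -> exp x <= exp y.
Proof.
  intros H. destruct (Rle_lt_or_eq_dec _ _ H) as [H1|H1].
  - left. apply exp_increasing. exact H1.
  - subst. lra.
Qed.

Definition Sq (q : R) (m : nat) : R :=
  sum_f_R0 (fun k => q ^ k / sqrt (INR (m - k) + 1)) m.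

Lemma Sq_rec (q : R) (m : nat) :
  Sq q (S m) = / sqrt (INR (S m) + 1) + q * Sq q m.
Proof.
  unfold Sq. rewrite decomp_sum by lia. simpl Init.Nat.pred.
  f_equal.
  - rewrite Nat.sub_0_r. simpl pow. unfold Rdiv. ring.
  - rewrite scal_sum. apply sum_eq. intros i Hi.
    simpl (S m - S i)%nat. simpl pow. unfold Rdiv. ring.
Qed.

Lemma sqrt_pos' (x : R) : 0 < x -> 0 < sqrt x.
Proof. intros; apply sqrt_lt_R0; lra. Qed.

Lemma Sq_bound (q B : R) : 0 <= q <= 1 -> 0 < B -> 1 <= B -> B * B * (1 - q) = 2 ->
  forall m, Sq q m <= 2 * sqrt (INR m + 1) /\ Sq q m <= B.
Proof.
  intros Hq HB HB1 HBB m. induction m as [|m [IH1 IH2]].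
  - unfold Sq. simpl. rewrite Rplus_0_l, sqrt_1. split; lra.
  - rewrite Sq_rec.
    assert (Hpos : 0 <= Sq q m).
    { unfold Sq. apply cond_pos_sum. intros k. unfold Rdiv.
      apply Rmult_le_pos. apply pow_le; lra.
      left. apply Rinv_0_lt_compat. apply sqrt_pos'. pose proof (pos_INR (m-k)). lra. }
    set (u := sqrt (INR m + 1)). set (v := sqrt (INR (S m) + 1)).
    assert (Hu : u * u = INR m + 1). { unfold u. apply sqrt_sqrt. pose proof (pos_INR m); lra. }
    assert (Hv : v * v = INR m + 2). { unfold v. rewrite sqrt_sqrt. rewrite S_INR; lra. rewrite S_INR; pose proof (pos_INR m); lra. }
    assert (Hu0 : 0 < u). { unfold u. apply sqrt_pos'. pose proof (pos_INR m); lra. }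
    assert (Hv0 : 0 < v). { unfold v. apply sqrt_pos'. pose proof (pos_INR (S m)); lra. }
    assert (HqS : q * Sq q m <= Sq q m). { pose proof (Rmult_le_compat_r (Sq q m) q 1 Hpos (proj2 Hq)). lra. }
    assert (Hinv : / v * v = 1) by (field; lra).
    assert (Hiv : 0 < / v) by (apply Rinv_0_lt_compat; lra).
    assert (A1 : / v + q * Sq q m <= 2 * v).
    { assert (2 * u + / v <= 2 * v).
      { assert (1 <= 2 * v * v - 2 * u * v) by (pose proof (Rle_0_sqr (v - u)); unfold Rsqr in *; nra).
        assert (/ v <= 2 * v - 2 * u).
        { apply Rmult_le_reg_r with v. lra. nra. }
        lra. }
      assert (Sq q m <= 2 * u) by (unfold u; exact IH1). lra. }
    split. exact A1.
    destruct (Rle_lt_dec (/ v) ((1 - q) * B)) as [C1|C1].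
    + assert (q * Sq q m <= q * B) by (apply Rmult_le_compat_l; lra). nra.
    +
      assert (H1 : v * ((1 - q) * B) < 1).
      { apply Rmult_lt_compat_l with (r := v) in C1; [|lra].
        rewrite Rinv_r in C1 by lra. lra. }
      assert (H2 : 2 * v * ((1-q) * B) < B * ((1-q) * B)) by nra.
      assert (H3 : 0 < (1 - q) * B).
      { destruct (Req_dec q 1) as [E|E]. subst. nra. nra. }
      assert (2 * v < B).
      { apply Rmult_lt_reg_r with ((1-q)*B); lra. }
      lra.
Qed.
Lemma term_bound (L dt : R) (p m k1 k2 : nat) : 0 < L -> 0 < dt -> (1 <= p)%nat ->
  (k1 <= m)%nat -> (k2 <= m)%nat ->
  dt ^ 2 * lemma6p4_term L dt p (S m) k1 k2 <=
  sqrt 2 * (dt * sqrt dt) *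
   (exp (- (PI^2/L^2) * dt) ^ k1 / sqrt (INR (m - k1) + 1)) * exp (- (PI^2/L^2) * dt) ^ k2.
Proof.
  intros HL Hdt Hp H1 H2.
  set (q := exp (- (PI^2/L^2) * dt)).
  assert (Hq : 0 < q) by apply exp_pos.
  assert (Hsd : 0 < sqrt dt) by (apply sqrt_pos'; lra).
  assert (Hsj : 0 < sqrt (INR (m - k1) + 1)) by (apply sqrt_pos'; pose proof (pos_INR (m-k1)); lra).
  assert (Hs2 : 0 < sqrt 2) by (apply sqrt_pos'; lra).
  assert (HR : 0 <= sqrt 2 * (dt * sqrt dt) * (q ^ k1 / sqrt (INR (m - k1) + 1)) * q ^ k2).
  { apply Rmult_le_pos. apply Rmult_le_pos. apply Rmult_le_pos; nra.
    unfold Rdiv. apply Rmult_le_pos. apply pow_le; lra. left; apply Rinv_0_lt_compat; lra.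
    apply pow_le; lra. }
  unfold lemma6p4_term.
  destruct (Nat.leb 1 (2 * S m - 2 - k1 - k2)) eqn:E.
  2: { rewrite Rmult_0_r. exact HR. }
  apply Nat.leb_le in E.
  set (M := (2 * S m - 2 - k1 - k2)%nat) in *.
  assert (HM : INR M = INR (m - k1) + INR (m - k2)).
  { rewrite <- plus_INR. f_equal. unfold M. lia. }
  assert (HM1 : 1 <= INR M). { replace 1 with (INR 1) by reflexivity. apply le_INR. exact E. }
  assert (Hj : INR (m - k1) + 1 <= 2 * INR M). { pose proof (pos_INR (m - k2)).
    destruct (Nat.eq_dec (m - k1) 0) as [Z|Z].
    - rewrite Z in HM |- *. simpl in HM |- *. lra.
    - assert (1 <= INR (m - k1)). { replace 1 with (INR 1) by reflexivity. apply le_INR. lia. } lra. }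
  assert (HsM : sqrt (INR (m - k1) + 1) <= sqrt 2 * sqrt (INR M)).
  { rewrite <- sqrt_mult by lra. apply sqrt_le_1; pose proof (pos_INR (m-k1)); lra. }
  assert (HsM0 : 0 < sqrt (INR M)) by (apply sqrt_pos'; lra).
  rewrite sqrt_mult by lra.
  assert (HE : exp (- INR p ^ 2 * (PI ^ 2 / L ^ 2) * INR (k1 + k2) * dt) <= q ^ k1 * q ^ k2).
  { unfold q. rewrite <- !expk, <- exp_plus. apply exp_mono.
    rewrite plus_INR.
    assert (Hp1 : 1 <= INR p). { replace 1 with (INR 1) by reflexivity. apply le_INR. exact Hp. }
    assert (Ha : 0 < PI ^ 2 / L ^ 2). { pose proof PI_RGT_0. unfold Rdiv. apply Rmult_lt_0_compat. nra. apply Rinv_0_lt_compat. nra. }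
    pose proof (pos_INR k1). pose proof (pos_INR k2).
    set (a := PI ^ 2 / L ^ 2) in *.
    assert (0 <= (INR p ^ 2 - 1) * a * (INR k1 + INR k2) * dt).
    { apply Rmult_le_pos; [|lra]. apply Rmult_le_pos; [|lra]. apply Rmult_le_pos; [|lra]. simpl. nra. }
    nra. }
  set (E0 := exp (- INR p ^ 2 * (PI ^ 2 / L ^ 2) * INR (k1 + k2) * dt)) in *.
  assert (HE0 : 0 < E0) by apply exp_pos.
  set (sd := sqrt dt) in *. set (sM := sqrt (INR M)) in *. set (sj := sqrt (INR (m - k1) + 1)) in *.
  assert (Hdt2 : sd * sd = dt) by (unfold sd; apply sqrt_sqrt; lra).
  replace (dt ^ 2 * (E0 / (sM * sd))) with (dt * sd * (E0 / sM)) by (rewrite <- Hdt2; field; lra).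
  replace (sqrt 2 * (dt * sd) * (q ^ k1 / sj) * q ^ k2) with (dt * sd * (sqrt 2 * (q ^ k1 * q ^ k2) / sj)) by (field; lra).
  apply Rmult_le_compat_l. nra.
  apply Rle_trans with ((q ^ k1 * q ^ k2) / sM).
  { unfold Rdiv. apply Rmult_le_compat_r. left; apply Rinv_0_lt_compat; lra. exact HE. }
  assert (0 < q ^ k1 * q ^ k2) by (apply Rmult_lt_0_compat; apply pow_lt; lra).
  apply Rmult_le_reg_r with (sM * sj). nra.
  replace (q ^ k1 * q ^ k2 / sM * (sM * sj)) with ((q ^ k1 * q ^ k2) * sj) by (field; lra).
  replace (sqrt 2 * (q ^ k1 * q ^ k2) / sj * (sM * sj)) with ((q ^ k1 * q ^ k2) * (sqrt 2 * sM)) by (field; lra).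
  apply Rmult_le_compat_l; lra.
Qed.

Theorem lemma6p4 (L : R) (hL : 0 < L) :
  exists C : R, 0 < C /\
    forall (dt : R) (p n : nat), 0 < dt < 1 -> (1 <= p)%nat -> (1 <= n)%nat ->
      dt ^ 2 * lemma6p4_sum L dt p n <= C.
Proof.
  set (a0 := PI ^ 2 / L ^ 2).
  assert (Ha : 0 < a0). { pose proof PI_RGT_0. unfold a0, Rdiv. apply Rmult_lt_0_compat. nra. apply Rinv_0_lt_compat. nra. }
  set (c := (1 + a0) / a0).
  assert (Hc : 0 < c) by (unfold c; apply Rdiv_lt_0_compat; lra).
  exists (2 * c * sqrt c). split.
  { pose proof (sqrt_pos' c Hc). nra. }
  intros dt p n Hdt Hp Hn.
  destruct n as [|m]; [lia|].
  unfold lemma6p4_sum. replace (S m - 1)%nat with m by lia.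
  set (q := exp (- a0 * dt)).
  set (K := sqrt 2 * (dt * sqrt dt)).
  set (A := fun k => q ^ k / sqrt (INR (m - k) + 1)).
  set (G := sum_f_R0 (fun k => q ^ k) m).
  assert (Step1 : dt ^ 2 * sum_f_R0 (fun k1 => sum_f_R0 (fun k2 => lemma6p4_term L dt p (S m) k1 k2) m) m
     <= sum_f_R0 (fun k1 => sum_f_R0 (fun k2 => K * A k1 * q ^ k2) m) m).
  { rewrite scal_sum. apply sum_Rle. intros k1 Hk1. rewrite Rmult_comm, scal_sum.
    apply sum_Rle. intros k2 Hk2. rewrite Rmult_comm. unfold K, A, q, a0.
    apply term_bound; lra || lia. }
  assert (EQ : sum_f_R0 (fun k1 => sum_f_R0 (fun k2 => K * A k1 * q ^ k2) m) m = K * G * Sq q m).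
  { unfold Sq. rewrite scal_sum. apply sum_eq. intros i _.
    transitivity (K * A i * G).
    - unfold G. rewrite scal_sum. apply sum_eq. intros; ring.
    - unfold A. ring. }
  rewrite EQ in Step1.
  set (y := a0 * dt).
  assert (Hy : 0 < y) by (unfold y; nra).
  assert (Hey : 1 + y < exp y) by (apply exp_ineq1; lra).
  assert (Hqe : q = / exp y) by (unfold q, y; rewrite <- exp_Ropp; f_equal; ring).
  assert (Hq0 : 0 < q) by apply exp_pos.
  assert (Hq1 : q < 1). { rewrite Hqe, <- Rinv_1. apply Rinv_lt_contravar; lra. }
  set (r := / (1 - q)).
  assert (Hr : 0 < r) by (unfold r; apply Rinv_0_lt_compat; lra).
  assert (Hr1 : 1 <= r). { unfold r. rewrite <- Rinv_1. apply Rinv_le_contravar; lra. }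
  assert (HG : G <= r).
  { pose proof (GP_finite q m) as GP. fold G in GP.
    assert (0 < q ^ (m + 1)) by (apply pow_lt; lra).
    unfold r. apply Rmult_le_reg_r with (1 - q). lra.
    rewrite Rinv_l by lra. nra. }
  assert (HG0 : 0 <= G). { unfold G. apply cond_pos_sum. intros; apply pow_le; lra. }
  set (B := sqrt (2 * r)).
  assert (HBB : B * B = 2 * r) by (unfold B; apply sqrt_sqrt; lra).
  assert (HB : 0 < B) by (unfold B; apply sqrt_pos'; lra).
  assert (HB1 : 1 <= B). { unfold B. rewrite <- sqrt_1. apply sqrt_le_1; lra. }
  assert (HBq : B * B * (1 - q) = 2). { rewrite HBB. unfold r. field. lra. }
  destruct (Sq_bound q B (conj (Rlt_le _ _ Hq0) (Rlt_le _ _ Hq1)) HB HB1 HBq m) as [_ HS].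
  assert (HS0 : 0 <= Sq q m).
  { unfold Sq. apply cond_pos_sum. intros k. unfold Rdiv.
    apply Rmult_le_pos. apply pow_le; lra.
    left. apply Rinv_0_lt_compat. apply sqrt_pos'. pose proof (pos_INR (m-k)). lra. }
  assert (HK : 0 <= K). { unfold K. pose proof (sqrt_pos 2). pose proof (sqrt_pos dt). apply Rmult_le_pos; nra. }
  assert (Step2 : K * G * Sq q m <= K * r * B).
  { apply Rmult_le_compat; try nra. }
  assert (Hdr : dt * r <= c).
  { unfold r, c. rewrite Hqe.
    assert (Hd : 1 - / exp y = (exp y - 1) / exp y) by (field; pose proof (exp_pos y); lra).
    rewrite Hd. pose proof (exp_pos y).
    rewrite Rinv_div. 
    apply Rmult_le_reg_r with ((exp y - 1) * a0). nra.
    replace (dt * (exp y / (exp y - 1)) * ((exp y - 1) * a0)) with (a0 * dt * exp y) by (field; lra). change (a0 * dt) with y.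
    replace ((1 + a0) / a0 * ((exp y - 1) * a0)) with ((1 + a0) * (exp y - 1)) by (field; lra).
    assert (y <= a0) by (unfold y; nra).
    nra. }
  assert (Hfin : K * r * B = 2 * (dt * r) * (sqrt dt * sqrt r)).
  { unfold K, B. rewrite sqrt_mult by lra.
    replace (sqrt 2 * (dt * sqrt dt) * r * (sqrt 2 * sqrt r))
      with ((sqrt 2 * sqrt 2) * (dt * r) * (sqrt dt * sqrt r)) by ring.
    rewrite sqrt_sqrt by lra. ring. }
  assert (Hsq : sqrt dt * sqrt r <= sqrt c).
  { rewrite <- sqrt_mult by lra. apply sqrt_le_1; nra. }
  assert (0 <= sqrt dt * sqrt r) by (apply Rmult_le_pos; apply sqrt_pos).
  assert (0 <= dt * r) by nra.
  assert (2 * (dt * r) * (sqrt dt * sqrt r) <= 2 * c * sqrt c).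
  { apply Rmult_le_compat; try nra. }
  lra.
Qed.
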